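(* Let $f:\mathbb{R}^n\times\mathbb{R}^m\to\mathbb{R}$ be twice continuously differentiable, $\mu$-strongly convex in $x$ for every fixed $y$ and $\mu$-strongly concave in $y$ for every fixed $x$ ($\mu>0$). Write $z=(x;y)$, $F(z)=(\nabla_x f(x,y);-\nabla_y f(x,y))$, and assume the largest singular value of $\nabla F(z)$ is at most $L$ for all $z$. Let $m(z)=\frac12\|F(z)\|^2$. Then for every $z=(x;y)$, $$\frac{\mu}{L^2}m(z)\le \max_{y'\in\mathbb{R}^m}f(x,y')-\min_{x'\in\mathbb{R}^n}f(x',y)\le \frac{L}{\mu^2}m(z).$$
   Context: $\|\cdot\|$ is the Euclidean norm for vectors and the largest singular value for matrices. *)

(* Defs.v *)
From HB Require Import structures.
From mathcomp Require Import all_boot all_order all_algebra.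
From mathcomp Require Import all_classical all_reals all_analysis.
Set Implicit Arguments. Unset Strict Implicit. Unset Printing Implicit Defensive.
Import Order.TTheory GRing.Theory Num.Theory.
Import numFieldNormedType.Exports.
Local Open Scope ring_scope.

Section Defs.
Variable R : realType.

Definition enorm (p q : nat) (A : 'M[R]_(p, q)) : R :=
  Num.sqrt (\sum_(i < p) \sum_(j < q) A i j ^+ 2).

Definition evec (d : nat) (i : 'I_d) : 'rV[R]_d := delta_mx 0 i.

Definition pd (d : nat) (g : 'rV[R]_d -> R) (i : 'I_d) (z : 'rV[R]_d) : R :=
  derive g z (evec i).

Definition C2 (d : nat) (g : 'rV[R]_d -> R) : Prop :=
  [/\ continuous g,
      (forall i z, derivable g z (evec i)),
      (forall i, continuous (pd g i)),
      (forall i j z, derivable (pd g i) z (evec j)) &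
      (forall i j, continuous (pd (pd g i) j))].

Definition strongly_convex (k : nat) (mu : R) (h : 'rV[R]_k -> R) : Prop :=
  forall (u v : 'rV[R]_k) (t : R), 0 <= t <= 1 ->
    h (t *: u + (1 - t) *: v)
      <= t * h u + (1 - t) * h v - mu / 2 * t * (1 - t) * enorm (u - v) ^+ 2.

Definition strongly_concave (k : nat) (mu : R) (h : 'rV[R]_k -> R) : Prop :=
  strongly_convex mu (fun u => - h u).

Definition joint (n m : nat) (f : 'rV[R]_n -> 'rV[R]_m -> R) (z : 'rV[R]_(n + m)) : R :=
  f (lsubmx z) (rsubmx z).

Definition Fop (n m : nat) (f : 'rV[R]_n -> 'rV[R]_m -> R) (z : 'rV[R]_(n + m))
  : 'rV[R]_(n + m) :=
  row_mx (\row_(i < n) pd (joint f) (lshift m i) z)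
         (- \row_(j < m) pd (joint f) (rshift n j) z).

Definition jacF (n m : nat) (f : 'rV[R]_n -> 'rV[R]_m -> R) (z : 'rV[R]_(n + m))
  : 'M[R]_(n + m) :=
  \matrix_(k, l) pd (fun w => Fop f w 0 k) l z.

(* largest singular value (= operator 2-norm) of A is at most L *)
Definition spec_norm_le (p q : nat) (A : 'M[R]_(p, q)) (L : R) : Prop :=
  forall v : 'cV[R]_q, enorm (A *m v) <= L * enorm v.

Definition merit (n m : nat) (f : 'rV[R]_n -> 'rV[R]_m -> R) (z : 'rV[R]_(n + m)) : R :=
  2^-1 * enorm (Fop f z) ^+ 2.

End Defs.

(* Main.v *)
Require Import Defs.
From HB Require Import structures.
From mathcomp Require Import all_boot all_order all_algebra.
From mathcomp Require Import all_classical all_reals all_analysis.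
From mathcomp Require Import ring lra.
Import Order.TTheory GRing.Theory Num.Theory.
Import numFieldNormedType.Exports.
Local Open Scope ring_scope.
Local Open Scope classical_set_scope.
Section G1.
Variable R : realType.

Lemma is_derive_scale1 (phi : R -> R) (c s d : R) : is_derive (s * c) 1 phi d ->
  is_derive s 1 (fun t => phi (t * c)) (c * d).
Proof.
move=> hd.
have hk : forall t : R, is_derive t 1 (c \*: (@id R)) (c *: 1).
  by move=> t; apply: is_deriveZ.
have E : (fun t => phi (t * c)) = phi \o (c \*: (@id R)).
  by apply/funext => t /=; rewrite mulrC.
have d1 : derivable phi ((c \*: (@id R)) s) 1.
  have -> : (c \*: (@id R)) s = s * c by rewrite /= [c *: s]mulrC.
  exact: ex_derive.
rewrite E; split.
  apply/derivable1_diffP; apply: differentiable_comp; apply/derivable1_diffP => //.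
rewrite -derive1E derive1_comp //.
have -> : (c \*: (@id R)) s = s * c by rewrite /= [c *: s]mulrC.
rewrite !derive1E derive_val (@derive_val _ _ _ _ _ _ _ (hk s)).
by rewrite [c%:A]mulr1 mulrC.
Qed.

Lemma mvt_any (phi dphi : R -> R) (a b : R) :
  (forall x : R, is_derive x (1:R) phi (dphi x)) ->
  exists c, `|c - a| <= `|b - a| /\ phi b - phi a = dphi c * (b - a).
Proof.
move=> hd.
have hc : continuous phi.
  by move=> x; apply: differentiable_continuous; apply/derivable1_diffP; exact: ex_derive.
have hd' : forall a b : R, forall x, x \in `]a, b[%R -> is_derive x (1:R) phi (dphi x) by [].
case: (leP a b) => ab.
  have [c /andP[]] := MVT_segment ab (hd' a b) (continuous_subspaceT hc).
  rewrite !bnd_simp => ac cb E; exists c; split => //.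
  by rewrite !ger0_norm ?subr_ge0 // lerB.
have [c /andP[]] := MVT_segment (ltW ab) (hd' b a) (continuous_subspaceT hc).
rewrite !bnd_simp => bc ca E; exists c; split.
  by rewrite !ler0_norm ?subr_le0 ?(ltW ab) // !opprB lerB.
by rewrite -[LHS]opprB E -mulrN opprB.
Qed.

Lemma fo1 (phi : R -> R) (D K c : R) : is_derive 0 (1:R) phi D ->
  (forall t, 0 < t <= 1 -> phi t - phi 0 <= t * (K + c * t)) -> D <= K.
Proof.
move=> [hd hv] H.
have q0 : (fun h : R => h^-1 *: ((phi \o shift 0) (h *: 1) - phi 0)) @ 0^' --> D by rewrite -hv; exact: hd.
have q1 := cvg_dnbhs_at_right q0.
have q2 : (fun t : R => K + c * t) @ 0^'+ --> K.
  apply: cvg_at_right_filter.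
  have : (fun t : R => K + c * t) @ (0:R) --> K + c * 0.
    apply: cvgD; [exact: cvg_cst | apply: cvgM; [exact: cvg_cst | exact: cvg_id]].
  by rewrite mulr0 addr0.
apply: (ler_cvg_to q1 q2).
near=> t.
have t0 : 0 < t by near: t; exact: nbhs_right_gt.
have t1 : t <= 1 by near: t; exact: nbhs_right_le.
rewrite /= [t *: 1]mulr1 addr0 [_ *: _]mulrC ler_pdivrMr // mulrC.
by apply: H; rewrite t0 t1.
Unshelve. all: by end_near.
Qed.

Lemma desc1 (phi dphi : R -> R) (M t : R) :
  (forall x : R, is_derive x (1:R) phi (dphi x)) -> 0 <= t ->
  (forall s, 0 <= s -> - (M * s) <= dphi s - dphi 0) ->
  - (M / 2 * t ^+ 2) <= phi t - phi 0 - t * dphi 0.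
Proof.
move=> hd t0 hM.
set d0 := dphi 0.
pose q := phi - d0 \*: (@id R) + (M / 2) \*: ((@id R) * (@id R)).
have hq : forall x : R, is_derive x (1:R) q (dphi x - d0 + M * x).
  move=> x; rewrite /q; apply: is_derive_eq.
  have sE : forall a b : R, a *: b = a * b by [].
  rewrite !sE !mulr1; change (dphi x - d0 + M / 2 * (x + x) = dphi x - d0 + M * x :> R); by field.
have hc : continuous q.
  by move=> x; apply: differentiable_continuous; apply/derivable1_diffP; exact: ex_derive.
have [c /andP[]] := MVT_segment t0 (fun x _ => hq x) (continuous_subspaceT hc).
rewrite !bnd_simp => c0 ct E.
have : 0 <= q t - q 0.
  rewrite E mulr_ge0 // ?subr_ge0 //.
  by have := hM c c0; rewrite -/d0; lra.
have qE : forall s, q s = phi s - d0 * s + M / 2 * (s * s) by move=> s; rewrite /q /=.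
rewrite !qE !mul0r !mulr0 expr2 [t * d0]mulrC; lra.
Qed.

Lemma CS2 (K : nat) (a b : 'I_K -> R) :
  (\sum_k a k * b k) ^+ 2 <= (\sum_k a k ^+ 2) * (\sum_k b k ^+ 2).
Proof.
set S := \sum_k a k * b k; set A := \sum_k a k ^+ 2; set B := \sum_k b k ^+ 2.
have h t : 0 <= A * t ^+ 2 - 2 * S * t + B.
  have -> : A * t ^+ 2 - 2 * S * t + B = \sum_k (a k * t - b k) ^+ 2.
    rewrite /A /S /B mulr_suml mulr_sumr mulr_suml -sumrB -big_split /=.
    by apply: eq_bigr => k _; ring.
  by apply: sumr_ge0 => k _; exact: sqr_ge0.
have A0 : 0 <= A by apply: sumr_ge0 => k _; exact: sqr_ge0.
case: (ltrP 0 A) => Ap.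
  have := h (S / A).
  have -> : A * (S / A) ^+ 2 - 2 * S * (S / A) + B = B - S ^+ 2 / A.
    by field; rewrite gt_eqF.
  rewrite subr_ge0 ler_pdivrMr // mulrC => ->.
  done.
have A00 : A = 0 by apply/eqP; rewrite eq_le Ap A0.
have a0 : forall k, a k = 0.
  move=> k; apply/eqP; rewrite -sqrf_eq0; apply/eqP.
  have := A00; rewrite /A => /eqP; rewrite psumr_eq0 => [/allP H|k' _]; last exact: sqr_ge0.
  by apply/eqP; apply: (implyP (H k (mem_index_enum k))).
have -> : S = 0 by rewrite /S big1 // => k _; rewrite a0 mul0r.
by rewrite A00 mul0r expr2 mul0r.
Qed.

Lemma CS (K : nat) (a b : 'I_K -> R) :
  \sum_k a k * b k <= Num.sqrt (\sum_k a k ^+ 2) * Num.sqrt (\sum_k b k ^+ 2).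
Proof.
rewrite -sqrtrM; last by apply: sumr_ge0 => k _; exact: sqr_ge0.
apply: (le_trans (ler_norm _)).
rewrite -sqrtr_sqr; apply: ler_wsqrtr; exact: CS2.
Qed.

Section G2.
Variable N : nat.
Implicit Types g : 'rV[R]_N -> R.

Lemma dir1 g p e s : derivable g (p + s *: e) e ->
  is_derive s 1 (fun t => g (p + t *: e)) ('D_e g (p + s *: e)).
Proof.
have E : (fun h : R => h^-1 *: (((fun t => g (p + t *: e)) \o shift s) (h *: 1) - g (p + s *: e)))
   = (fun h => h^-1 *: ((g \o shift (p + s *: e)) (h *: e) - g (p + s *: e))).
  apply/funext => h /=.
  by rewrite [h *: 1]mulr1 scalerDl addrCA.
move=> d; split; first by rewrite /derivable E.
by rewrite /derive E.
Qed.

Lemma dirD g (u e : 'rV[R]_N) (Du De : 'rV[R]_N -> R) :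
  (forall z, is_derive z u g (Du z)) -> continuous De ->
  (forall p s, is_derive s (1:R) (fun t => g (p + t *: e)) (De (p + s *: e))) ->
  forall z, is_derive z (u + e) g (Du z + De z).
Proof.
move=> hu hc he z.
have key : (fun h : R => h^-1 *: (g (h *: e + (z + h *: u)) - g (z + h *: u))) @ 0^' --> De z.
  apply/cvgrPdist_lt => eps eps0.
  have := hc z; move/cvgrPdist_lt/(_ eps eps0)/nbhs_ballP => [del del0 Hb].
  have K0 : 0 < `|u| + `|e| + 1 by rewrite ltr_wpDl // addr_ge0.
  near=> h.
  have hn0 : h != 0 by near: h; exact: nbhs_dnbhs_neq.
  have hlt : `|h| < del / (`|u| + `|e| + 1).
    near: h; apply: dnbhs0_lt; exact: divr_gt0.
  have [c [hc1 hc2]] := @mvt_any _ _ 0 h (he (z + h *: u)).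
  rewrite !subr0 in hc1 hc2.
  rewrite scale0r addr0 in hc2.
  rewrite [h *: e + _]addrC hc2 /= [_ *: _]mulrC mulfK //.
  apply: Hb; rewrite -ball_normE /ball_ /=.
  rewrite -addrA opprD addrA subrr sub0r normrN.
  apply: (le_lt_trans (ler_normD _ _)); rewrite !normrZ.
  apply: (le_lt_trans (y := `|h| * (`|u| + `|e| + 1))).
    rewrite mulrDr mulrDr mulr1 -addrA lerD2l.
    apply: (le_trans (y := `|h| * `|e|)); last by rewrite lerDl.
    by rewrite ler_wpM2r.
  by rewrite -ltr_pdivlMr.
have hu' : (fun h : R => h^-1 *: ((g \o shift z) (h *: u) - g z)) @ 0^' --> Du z.
  case: (hu z) => hd dv; rewrite -dv; exact: hd.
have E : (fun h : R => h^-1 *: ((g \o shift z) (h *: (u + e)) - g z)) =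
  (fun h : R => h^-1 *: (g (h *: e + (z + h *: u)) - g (z + h *: u)) +
   h^-1 *: ((g \o shift z) (h *: u) - g z)).
  apply/funext => h /=; rewrite -scalerDr; congr (_ *: _).
  rewrite [h *: u + z]addrC addrA subrK; congr (g _ - _).
  by rewrite scalerDr [h *: u + _]addrC -addrA [h *: u + z]addrC.
have T : (fun h : R => h^-1 *: ((g \o shift z) (h *: (u + e)) - g z)) @ 0^' --> Du z + De z.
  by rewrite E addrC; apply: cvgD.
split; first by apply/cvg_ex; eexists; exact: T.
by apply: cvg_lim.
Unshelve. all: by end_near.
Qed.

Definition dd g (w : 'rV[R]_N) (z : 'rV[R]_N) : R := \sum_(l < N) w 0 l * pd g l z.

Lemma LA g : (forall l q, derivable g q (evec R l)) -> (forall l, continuous (pd g l)) ->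
  forall w z, is_derive z w g (dd g w z).
Proof.
move=> hd hc w.
suff H : forall s : seq 'I_N,
  (forall z, is_derive z (\sum_(l <- s) w 0 l *: evec R l) g (\sum_(l <- s) w 0 l * pd g l z)) /\
  continuous (fun z => \sum_(l <- s) w 0 l * pd g l z).
  have [H1 _] := H (index_enum 'I_N).
  move=> z; have := H1 z; rewrite /dd /evec -row_sum_delta; exact.
elim => [|a s [IH1 IH2]].
  split; first by move=> z; rewrite !big_nil; exact: is_derive0.
  have -> : (fun z => \sum_(l <- [::]) w 0 l * pd g l z) = cst 0.
    by apply/funext => z; rewrite big_nil.
  exact: cst_continuous.
have he : forall p s, is_derive s (1:R) (fun t => g (p + t *: (w 0 a *: evec R a)))
     ((fun q => w 0 a * pd g a q) (p + s *: (w 0 a *: evec R a))).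
  move=> p s0.
  have -> : (fun t => g (p + t *: (w 0 a *: evec R a))) = (fun t => (fun t => g (p + t *: evec R a)) (t * w 0 a)).
    by apply/funext => t; rewrite scalerA.
  rewrite /= scalerA; apply: (@is_derive_scale1 (fun t => g (p + t *: evec R a))).
  exact: dir1.
have hcD : continuous (fun q => w 0 a * pd g a q).
  move=> q; apply: continuousM; [exact: cst_continuous | exact: hc].
split.
  move=> z; rewrite !big_cons.
  have := @dirD g _ _ _ _ IH1 hcD he z.
  by rewrite [X in is_derive _ X]addrC [X in is_derive _ _ _ X -> _]addrC.
have -> : (fun z => \sum_(l <- a :: s) w 0 l * pd g l z) =
   (fun z => w 0 a * pd g a z) + (fun z => \sum_(l <- s) w 0 l * pd g l z).
  by apply/funext => z; rewrite big_cons.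
move=> z; apply: continuousD; [exact: hcD | exact: IH2].
Qed.

Lemma LA_line g : (forall l q, derivable g q (evec R l)) -> (forall l, continuous (pd g l)) ->
  forall p w s, is_derive s (1:R) (fun t => g (p + t *: w)) (dd g w (p + s *: w)).
Proof.
move=> hd hc p w s.
have [d1 d2] := @LA g hd hc w (p + s *: w).
rewrite -d2; exact: dir1.
Qed.
End G2.

Lemma exists_min (K : nat) (h : 'rV[R]_K -> R) (x0 : 'rV[R]_K) (r : R) :
  continuous h -> 0 <= r -> (forall x, r < `|x0 - x| -> h x0 <= h x) ->
  exists xm, forall x, h xm <= h x.
Proof.
move=> hc r0 H.
pose A := [set x : 'rV[R]_K | `|x0 - x| <= r].
have Ac : compact A.
  apply: bounded_closed_compact; last exact: closed_closed_ball_.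
  rewrite /bounded_set /= /bounded_near.
  near=> M => x /= hx.
  apply: (le_trans (y := `|x0| + r)).
    have -> : x = x0 - (x0 - x) by rewrite opprB addrC subrK.
    apply: (le_trans (ler_normB _ _)); exact: lerD.
  near: M; apply: nbhs_pinfty_ge; exact: num_real.
have A0 : A !=set0 by exists x0; rewrite /A /= subrr normr0.
have [c cA Hc] := EVT_min_rV A0 Ac (continuous_subspaceT hc).
exists c => x.
case: (leP `|x0 - x| r) => hx.
  by apply: Hc; rewrite inE.
apply: (le_trans _ (H x hx)); apply: Hc; rewrite inE /A /= subrr normr0 //.
Unshelve. all: by end_near.
Qed.

Section G3.
Variables n m : nat.
Lemma nE p q (A : 'M[R]_(p,q)) : `|A| = mx_norm A. Proof. by []. Qed.
Lemma norm_row_mxl (a : 'rV[R]_n) : `|row_mx a (0:'rV[R]_m)| <= `|a|.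
Proof.
rewrite [leLHS]nE mx_normrE.
apply: bigmax_le => //= -[i j] _ /=.
case: (split_ordP j) => k ->.
  rewrite row_mxEl [leRHS]nE mx_normrE.
  by apply/bigmax_geP; right; exists (i, k).
rewrite row_mxEr mxE normr0 //.
Qed.

Lemma norm_row_mxr (a : 'rV[R]_m) : `|row_mx (0:'rV[R]_n) a| <= `|a|.
Proof.
rewrite [leLHS]nE mx_normrE.
apply: bigmax_le => //= -[i j] _ /=.
case: (split_ordP j) => k ->.
  by rewrite row_mxEl mxE normr0.
rewrite row_mxEr [leRHS]nE mx_normrE.
by apply/bigmax_geP; right; exists (i, k).
Qed.

Lemma cont_row_mxl (y : 'rV[R]_m) : continuous (fun x : 'rV[R]_n => row_mx x y).
Proof.
move=> x0; apply/(@cvgrPdist_lt _ _ _ _ (nbhs_filter x0)) => e e0.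
have H : \forall x \near x0, `|x0 - x| < e.
  by have := @nbhsx_ballx _ _ x0 e e0; rewrite -ball_normE.
near=> x.
rewrite opp_row_mx add_row_mx subrr.
apply: (le_lt_trans (norm_row_mxl _)).
near: x; exact: H.
Unshelve. all: by end_near.
Qed.

Lemma cont_row_mxr (x : 'rV[R]_n) : continuous (fun y : 'rV[R]_m => row_mx x y).
Proof.
move=> y0; apply/(@cvgrPdist_lt _ _ _ _ (nbhs_filter y0)) => e e0.
have H : \forall y \near y0, `|y0 - y| < e.
  by have := @nbhsx_ballx _ _ y0 e e0; rewrite -ball_normE.
near=> y.
rewrite opp_row_mx add_row_mx subrr.
apply: (le_lt_trans (norm_row_mxr _)).
near: y; exact: H.
Unshelve. all: by end_near.
Qed.
End G3.
End G1.
Arguments dd {R N}.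
Arguments LA {R N}.
Arguments LA_line {R N}.
Arguments CS {R K}.
Arguments mvt_any {R}.
Arguments fo1 {R}.
Arguments desc1 {R}.
Arguments exists_min {R K}.
Arguments cont_row_mxl {R n m}.
Arguments cont_row_mxr {R n m}.

Section P.
Variable R : realType.

Definition ssr (K : nat) (u : 'rV[R]_K) : R := \sum_(j < K) u 0 j ^+ 2.
Arguments ssr {K}.

Lemma ssr_ge0 K (u : 'rV[R]_K) : 0 <= ssr u.
Proof. by apply: sumr_ge0 => k _; exact: sqr_ge0. Qed.
Arguments ssr_ge0 {K}.

Lemma enorm_row K (u : 'rV[R]_K) : enorm u = Num.sqrt (ssr u).
Proof. by rewrite /enorm big_ord1. Qed.
Arguments enorm_row {K}.

Lemma enorm_col K (v : 'cV[R]_K) : enorm v = Num.sqrt (\sum_(i < K) v i 0 ^+ 2).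
Proof. by rewrite /enorm; congr Num.sqrt; apply: eq_bigr => i _; rewrite big_ord1. Qed.
Arguments enorm_col {K}.

Lemma enorm_tr K (u : 'rV[R]_K) : enorm u^T = enorm u.
Proof. by rewrite enorm_col enorm_row; congr Num.sqrt; apply: eq_bigr => i _; rewrite mxE. Qed.
Arguments enorm_tr {K}.

Lemma mxsubE p q (A B : 'M[R]_(p,q)) i j : (A - B) i j = A i j - B i j.
Proof. by rewrite !mxE. Qed.
Arguments mxsubE {p q}.

Lemma enorm_ge0 p q (A : 'M[R]_(p, q)) : 0 <= enorm A.
Proof. exact: sqrtr_ge0. Qed.
Arguments enorm_ge0 {p q}.

Lemma enorm_sq K (u : 'rV[R]_K) : enorm u ^+ 2 = ssr u.
Proof. by rewrite enorm_row sqr_sqrtr // ssr_ge0. Qed.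
Arguments enorm_sq {K}.

Lemma ssrZ K (c : R) (u : 'rV[R]_K) : ssr (c *: u) = c ^+ 2 * ssr u.
Proof. by rewrite /ssr mulr_sumr; apply: eq_bigr => j _; rewrite mxE exprMn. Qed.
Arguments ssrZ {K}.

Lemma CSrow K (a b : 'rV[R]_K) : \sum_j a 0 j * b 0 j <= enorm a * enorm b.
Proof. by rewrite !enorm_row; exact: (CS (fun j => a 0 j) (fun j => b 0 j)). Qed.
Arguments CSrow {K}.

Variables (n m : nat) (f : 'rV[R]_n -> 'rV[R]_m -> R).
Local Notation G := (joint f).

Definition sg (k : 'I_(n + m)) : R := if (k < n)%N then 1 else -1.

Lemma sg2 k : sg k * sg k = 1.
Proof. by rewrite /sg; case: ifP => _; rewrite ?mulr1 ?mulrNN ?mulr1. Qed.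

Lemma FopE z k : Fop f z 0 k = sg k * pd G k z.
Proof.
rewrite /Fop /sg; case: (split_ordP k) => i ->.
  by rewrite row_mxEl mxE mul1r.
by rewrite row_mxEr !mxE mulN1r.
Qed.

Lemma jointE x y : G (row_mx x y) = f x y.
Proof. by rewrite /joint row_mxKl row_mxKr. Qed.

Lemma dd_splitl (a : 'rV[R]_n) z :
  dd G (row_mx a 0) z = \sum_(i < n) a 0 i * pd G (lshift m i) z.
Proof.
rewrite /dd big_split_ord /=.
rewrite [X in _ + X]big1 ?addr0; last by move=> j _; rewrite row_mxEr mxE mul0r.
by apply: eq_bigr => i _; rewrite row_mxEl.
Qed.

Lemma dd_splitr (b : 'rV[R]_m) z :
  dd G (row_mx 0 b) z = \sum_(j < m) b 0 j * pd G (rshift n j) z.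
Proof.
rewrite /dd big_split_ord /=.
rewrite [X in X + _]big1 ?add0r; last by move=> j _; rewrite row_mxEl mxE mul0r.
by apply: eq_bigr => i _; rewrite row_mxEr.
Qed.

Definition gx z : 'rV[R]_n := \row_(i < n) pd G (lshift m i) z.
Definition gy z : 'rV[R]_m := \row_(j < m) pd G (rshift n j) z.

Lemma merit_eq z : merit f z = 2^-1 * (ssr (gx z) + ssr (gy z)).
Proof.
rewrite /merit enorm_sq /ssr big_split_ord /=; congr (_ * (_ + _)).
  by apply: eq_bigr => i _; rewrite /Fop row_mxEl.
by apply: eq_bigr => j _; rewrite /Fop row_mxEr !mxE sqrrN.
Qed.


Variables (mu L : R).
Hypothesis mu0 : 0 < mu.
Hypothesis hC2 : C2 G.
Hypothesis hcx : forall y, strongly_convex mu (fun x => f x y).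
Hypothesis hcc : forall x, strongly_concave mu (fun y => f x y).
Hypothesis hJ : forall z, spec_norm_le (jacF f z) L.

Lemma Gcont : continuous G. Proof. by case: hC2. Qed.
Lemma Gd : forall i z, derivable G z (evec R i). Proof. by case: hC2. Qed.
Lemma Gpc : forall i, continuous (pd G i). Proof. by case: hC2. Qed.
Lemma Gpd : forall i j z, derivable (pd G i) z (evec R j). Proof. by case: hC2. Qed.
Lemma Gppc : forall i j, continuous (pd (pd G i) j). Proof. by case: hC2. Qed.

Lemma Gline p w s : is_derive s (1:R) (fun t => G (p + t *: w)) (dd G w (p + s *: w)).
Proof. exact: (LA_line G Gd Gpc). Qed.

Lemma Pline k p w s : is_derive s (1:R) (fun t => pd G k (p + t *: w)) (dd (pd G k) w (p + s *: w)).
Proof. exact: (LA_line (pd G k) (Gpd k) (Gppc k)). Qed.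

Lemma jacE z k l : jacF f z k l = sg k * pd (pd G k) l z.
Proof.
rewrite /jacF mxE.
have -> : (fun w => Fop f w 0 k) = sg k \*: pd G k.
  by apply/funext => w; rewrite FopE.
by rewrite /pd deriveZ //; exact: Gpd.
Qed.

Lemma Lip z z' : ssr (Fop f z' - Fop f z) <= L * enorm (Fop f z' - Fop f z) * enorm (z' - z).
Proof.
set u := Fop f z' - Fop f z; set w := z' - z.
pose psi := \sum_(k < n + m) (fun s : R => u 0 k * Fop f (z + s *: w) 0 k).
have psiE : forall s, psi s = \sum_(k < n + m) u 0 k * Fop f (z + s *: w) 0 k.
  by move=> s; rewrite /psi fct_sumE.
have hpsi : forall s : R, is_derive s (1:R) psi
    (\sum_(k < n + m) u 0 k * (sg k * dd (pd G k) w (z + s *: w))).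
  move=> s; apply: is_derive_sum => k.
  have -> : (fun t : R => u 0 k * Fop f (z + t *: w) 0 k) =
     (u 0 k * sg k) \*: (fun t => pd G k (z + t *: w)).
    by apply/funext => t; rewrite FopE /= mulrA.
  apply: is_derive_eq; first exact: (is_deriveZ _ (Pline k z w s)).
  have sE : forall a b : R, a *: b = a * b by [].
  by rewrite sE -mulrA.
have [c [_ hc]] := mvt_any psi _ 0 1 hpsi.
set p := z + c *: w in hc.
set v := jacF f p *m w^T.
have E1 : psi 1 - psi 0 = ssr u.
  rewrite !psiE scale1r scale0r addr0 /w [z + _]addrC subrK -sumrB /ssr.
  by apply: eq_bigr => k _; rewrite -mulrBr expr2 /u !mxE.
have E2 : \sum_(k < n + m) u 0 k * (sg k * dd (pd G k) w p) = \sum_(k < n + m) u 0 k * v^T 0 k.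
  apply: eq_bigr => k _; congr (_ * _).
  rewrite !mxE /dd mulr_sumr; apply: eq_bigr => l _.
  by rewrite jacE !mxE; ring.
rewrite -E1 hc subr0 mulr1 E2.
apply: (le_trans (CSrow u v^T)).
rewrite -mulrA [L * _]mulrC -mulrA; apply: ler_wpM2l; first exact: enorm_ge0.
have := hJ p w^T; rewrite enorm_tr -/v.
by rewrite -[v]trmxK enorm_tr trmxK mulrC.
Qed.


Definition Lp := Num.max L 0.
Lemma Lp_ge0 : 0 <= Lp. Proof. by rewrite /Lp le_max lexx orbT. Qed.

Lemma LipN z z' : enorm (Fop f z' - Fop f z) <= Lp * enorm (z' - z).
Proof.
set u := Fop f z' - Fop f z.
have H := Lip z z'; rewrite -/u -enorm_sq in H.
have hL : L * enorm u * enorm (z' - z) <= Lp * enorm u * enorm (z' - z).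
  by rewrite -!mulrA ler_wpM2r ?mulr_ge0 ?enorm_ge0 // /Lp le_max lexx.
have {}H := le_trans H hL.
have := enorm_ge0 u; rewrite le_eqVlt => /orP[/eqP <-|up].
  by rewrite mulr_ge0 ?enorm_ge0 ?Lp_ge0.
by rewrite expr2 -mulrA [enorm u * enorm (z' - z)]mulrC mulrA ler_pM2r in H.
Qed.

Lemma enormZ K (c : R) (w : 'rV[R]_K) : enorm (c *: w) = `|c| * enorm w.
Proof. by rewrite !enorm_row ssrZ sqrtrM ?sqr_ge0 // sqrtr_sqr. Qed.
Arguments enormZ {K}.

Lemma pdF l z : pd G l z = sg l * Fop f z 0 l.
Proof. by rewrite FopE mulrA sg2 mul1r. Qed.

Lemma dphi_bound p w s : 0 <= s ->
  `|dd G w (p + s *: w) - dd G w p| <= Lp * ssr w * s.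
Proof.
move=> s0.
set q := p + s *: w.
set a : 'rV[R]_(n + m) := \row_l (w 0 l * sg l).
set b := Fop f q - Fop f p.
have E : dd G w q - dd G w p = \sum_l a 0 l * b 0 l.
  rewrite /dd -sumrB; apply: eq_bigr => l _.
  by rewrite mxsubE [a 0 l]mxE !pdF; ring.
have ea : enorm a = enorm w.
  rewrite !enorm_row /ssr; congr Num.sqrt; apply: eq_bigr => l _.
  by rewrite mxE exprMn [sg l ^+ 2]expr2 (sg2 l) mulr1.
have eb : enorm b <= Lp * (s * enorm w).
  have hq : q - p = s *: w by rewrite /q addrAC subrr add0r.
  by have := LipN p q; rewrite hq enormZ ger0_norm.
have key : enorm a * enorm b <= Lp * ssr w * s.
  rewrite ea -enorm_sq expr2.
  apply: (le_trans (ler_wpM2l (enorm_ge0 _) eb)).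
  by rewrite le_eqVlt; apply/orP; left; apply/eqP; ring.
rewrite E ler_norml; apply/andP; split; last first.
  exact: (le_trans (CSrow a b)).
rewrite lerNl -sumrN.
have := CSrow (- a) b.
have -> : enorm (- a) = enorm a.
  by rewrite -scaleN1r enormZ normrN normr1 mul1r.
move=> H; apply: (le_trans _ (le_trans H key)).
by rewrite le_eqVlt; apply/orP; left; apply/eqP; apply: eq_bigr => l _; rewrite !mxE mulNr.
Qed.

Lemma descent p w t : 0 <= t ->
  `|G (p + t *: w) - G p - t * dd G w p| <= Lp / 2 * t ^+ 2 * ssr w.
Proof.
move=> t0.
have hd : forall x : R, is_derive x (1:R) (fun s => G (p + s *: w)) (dd G w (p + x *: w)).
  by move=> x; exact: Gline.
have E0 : forall (h : 'rV[R]_(n + m) -> R), h (p + 0 *: w) = h p.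
  by move=> h; rewrite scale0r addr0.
have hb := dphi_bound p w.
have H1 := desc1 (fun s => G (p + s *: w)) (fun x => dd G w (p + x *: w)) (Lp * ssr w) t hd t0.
have hdN : forall x : R, is_derive x (1:R) (fun s => - G (p + s *: w)) (- dd G w (p + x *: w)).
  by move=> x; apply: is_deriveN.
have H2 := desc1 (fun s => - G (p + s *: w)) (fun x => - dd G w (p + x *: w)) (Lp * ssr w) t hdN t0.
rewrite /= !E0 in H1 H2.
have B : forall s, 0 <= s -> `|dd G w (p + s *: w) - dd G w p| <= Lp * ssr w * s.
  by move=> s s0; exact: hb.
have h1 : - (Lp * ssr w / 2 * t ^+ 2) <= G (p + t *: w) - G p - t * dd G w p.
  by apply: H1 => s s0; have := hb s s0; rewrite ler_norml => /andP[].
have h2 : - (Lp * ssr w / 2 * t ^+ 2) <= - G (p + t *: w) - - G p - t * - dd G w p.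
  by apply: H2 => s s0; have := hb s s0; rewrite ler_norml => /andP[_ h]; lra.
rewrite ler_norml; apply/andP; split; lra.
Qed.


Lemma enormN K (a : 'rV[R]_K) : enorm (- a) = enorm a.
Proof. by rewrite -scaleN1r enormZ normrN normr1 mul1r. Qed.
Arguments enormN {K}.

Lemma CSlow K (a b : 'rV[R]_K) : - (enorm a * enorm b) <= \sum_j a 0 j * b 0 j.
Proof.
rewrite lerNl -sumrN -(enormN a).
apply: le_trans (CSrow (- a) b).
by rewrite le_eqVlt; apply/orP; left; apply/eqP; apply: eq_bigr => l _; rewrite !mxE mulNr.
Qed.
Arguments CSlow {K}.

Lemma FOx x x' y :
  f x y + dd G (row_mx (x' - x) 0) (row_mx x y) + mu / 2 * ssr (x' - x) <= f x' y.
Proof.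
set z := row_mx x y; set w := row_mx (x' - x) (0 : 'rV[R]_m).
have phiE : forall t, G (z + t *: w) = f (x + t *: (x' - x)) y.
  by move=> t; rewrite /z /w scale_row_mx add_row_mx scaler0 addr0 jointE.
have hd := Gline z w 0; rewrite scale0r addr0 in hd.
suff : dd G w z <= f x' y - f x y - mu / 2 * ssr (x' - x) by lra.
apply: (fo1 (fun t => G (z + t *: w)) _ _ (mu / 2 * ssr (x' - x)) hd) => t /andP[t0 t1].
rewrite /= !phiE scale0r addr0.
have := hcx y x' x t; rewrite t1 ltW //= enorm_sq => H.
have -> : x + t *: (x' - x) = t *: x' + (1 - t) *: x.
  by apply/matrixP => i j; rewrite !mxE; ring.
move: H; set A := f (t *: x' + (1 - t) *: x) y => H.
lra.
Qed.

Lemma FOy x y y' :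
  f x y' <= f x y + dd G (row_mx 0 (y' - y)) (row_mx x y) - mu / 2 * ssr (y' - y).
Proof.
set z := row_mx x y; set w := row_mx (0 : 'rV[R]_n) (y' - y).
have phiE : forall t, - G (z + t *: w) = - f x (y + t *: (y' - y)).
  by move=> t; rewrite /z /w scale_row_mx add_row_mx scaler0 addr0 jointE.
have hd := Gline z w 0; rewrite scale0r addr0 in hd.
have hdN : is_derive (0:R) (1:R) (fun t => - G (z + t *: w)) (- dd G w z) by apply: is_deriveN.
suff : - dd G w z <= - f x y' + f x y - mu / 2 * ssr (y' - y) by lra.
apply: (fo1 (fun t => - G (z + t *: w)) _ _ (mu / 2 * ssr (y' - y)) hdN) => t /andP[t0 t1].
rewrite /= !phiE scale0r addr0.
have := hcc x y' y t; rewrite t1 ltW //= enorm_sq => H.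
have -> : y + t *: (y' - y) = t *: y' + (1 - t) *: y.
  by apply/matrixP => i j; rewrite !mxE; ring.
move: H; set A := f x (t *: y' + (1 - t) *: y) => H.
lra.
Qed.

Lemma FOx2 x x' y :
  f x y - enorm (x' - x) * enorm (gx (row_mx x y)) + mu / 2 * enorm (x' - x) ^+ 2 <= f x' y.
Proof.
have := FOx x x' y; rewrite dd_splitl enorm_sq.
have := CSlow (x' - x) (gx (row_mx x y)).
have -> : \sum_j (x' - x) 0 j * gx (row_mx x y) 0 j =
  \sum_i (x' - x) 0 i * pd G (lshift m i) (row_mx x y).
  by apply: eq_bigr => i _; rewrite [gx _ 0 i]mxE.
lra.
Qed.

Lemma FOy2 x y y' :
  f x y' <= f x y + enorm (y' - y) * enorm (gy (row_mx x y)) - mu / 2 * enorm (y' - y) ^+ 2.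
Proof.
have := FOy x y y'; rewrite dd_splitr enorm_sq.
have := CSrow (y' - y) (gy (row_mx x y)).
have -> : \sum_j (y' - y) 0 j * gy (row_mx x y) 0 j =
  \sum_j (y' - y) 0 j * pd G (rshift n j) (row_mx x y).
  by apply: eq_bigr => i _; rewrite [gy _ 0 i]mxE.
lra.
Qed.


Lemma arith (A B bx by' : R) : 0 < mu -> 0 < L -> 0 < bx + by' ->
  2 * mu * A <= by' -> 2 * mu * B <= bx -> by' <= 2 * L * A -> bx <= 2 * L * B ->
  mu / L ^+ 2 * (2^-1 * (bx + by')) <= A + B /\ A + B <= L / mu ^+ 2 * (2^-1 * (bx + by')).
Proof.
move=> mp Lp0 Qp h1 h2 h3 h4.
set Q := bx + by' in Qp *; set S := A + B.
have hQ1 : Q <= 2 * L * S by rewrite /Q /S; lra.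
have hQ2 : 2 * mu * S <= Q by rewrite /Q /S; lra.
have Sp : 0 < S.
  have : 0 < (2 * L) * S by lra.
  by rewrite pmulr_rgt0 // mulr_gt0.
have muL : mu <= L.
  have : 2 * mu * S <= 2 * L * S by lra.
  by rewrite ler_pM2r // ler_pM2l.
split.
  have -> : mu / L ^+ 2 * (2^-1 * Q) = (mu * Q) / (2 * L ^+ 2) by field; rewrite gt_eqF.
  rewrite ler_pdivrMr ?mulr_gt0 ?exprn_gt0 //.
  have : mu * Q <= mu * (2 * L * S) by rewrite ler_pM2l.
  have : mu * (2 * L * S) <= L * (2 * L * S) by rewrite ler_pM2r // !mulr_gt0.
  rewrite expr2; lra.
have -> : L / mu ^+ 2 * (2^-1 * Q) = (L * Q) / (2 * mu ^+ 2) by field; rewrite gt_eqF.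
rewrite ler_pdivlMr ?mulr_gt0 ?exprn_gt0 //.
have : L * (2 * mu * S) <= L * Q by rewrite ler_pM2l.
have : mu * (2 * mu * S) <= L * (2 * mu * S) by rewrite ler_pM2r // !mulr_gt0.
rewrite expr2; lra.
Qed.


Lemma mxnorm_le_enorm K (u : 'rV[R]_K) : `|u| <= enorm u.
Proof.
rewrite [leLHS](_ : _ = mx_norm u) // mx_normrE enorm_row.
apply: bigmax_le; first exact: sqrtr_ge0.
move=> [i j] _ /=; rewrite (ord1 i) -sqrtr_sqr; apply: ler_wsqrtr.
rewrite /ssr (bigD1 j) //= lerDl; apply: sumr_ge0 => k _; exact: sqr_ge0.
Qed.
Arguments mxnorm_le_enorm {K}.

Lemma ssr_row0l (a : 'rV[R]_n) : ssr (row_mx a (0 : 'rV[R]_m)) = ssr a.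
Proof.
rewrite /ssr big_split_ord /= [X in _ + X]big1 ?addr0; last by move=> j _; rewrite row_mxEr mxE expr2 mul0r.
by apply: eq_bigr => i _; rewrite row_mxEl.
Qed.

Lemma ssr_row0r (b : 'rV[R]_m) : ssr (row_mx (0 : 'rV[R]_n) b) = ssr b.
Proof.
rewrite /ssr big_split_ord /= [X in X + _]big1 ?add0r; last by move=> j _; rewrite row_mxEl mxE expr2 mul0r.
by apply: eq_bigr => i _; rewrite row_mxEr.
Qed.

Lemma LoA x y ym : (forall y', f x y' <= f x ym) -> forall t, 0 <= t ->
  t * ssr (gy (row_mx x y)) - Lp / 2 * t ^+ 2 * ssr (gy (row_mx x y)) <= f x ym - f x y.
Proof.
move=> hm t t0.
set z := row_mx x y; set w := row_mx (0 : 'rV[R]_n) (gy z).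
have D := @descent z w t t0.
have E1 : G (z + t *: w) = f x (y + t *: gy z).
  by rewrite /z /w scale_row_mx add_row_mx scaler0 addr0 jointE.
have E2 : dd G w z = ssr (gy z).
  rewrite dd_splitr /ssr; apply: eq_bigr => j _; rewrite expr2; congr (_ * _).
  by rewrite mxE.
rewrite E1 E2 /w ssr_row0r /z jointE -/z in D.
have := hm (y + t *: gy z).
move: D; rewrite ler_norml => /andP[D1 _].
lra.
Qed.

Lemma LoB x y xm : (forall x', f xm y <= f x' y) -> forall t, 0 <= t ->
  t * ssr (gx (row_mx x y)) - Lp / 2 * t ^+ 2 * ssr (gx (row_mx x y)) <= f x y - f xm y.
Proof.
move=> hm t t0.
set z := row_mx x y; set w := row_mx (- gx z) (0 : 'rV[R]_m).
have D := @descent z w t t0.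
have E1 : G (z + t *: w) = f (x + t *: - gx z) y.
  by rewrite /z /w scale_row_mx add_row_mx scaler0 addr0 jointE.
have E2 : dd G w z = - ssr (gx z).
  rewrite dd_splitl /ssr -sumrN; apply: eq_bigr => j _; rewrite expr2 -mulNr; congr (_ * _); by rewrite !mxE.
have E3 : ssr w = ssr (gx z).
  by rewrite /w ssr_row0l -scaleN1r ssrZ sqrrN expr1n mul1r.
rewrite E1 E2 E3 /z jointE -/z in D.
have := hm (x + t *: - gx z).
move: D; rewrite ler_norml => /andP[_ D2].
lra.
Qed.

Lemma UpA x y ym : 2 * mu * (f x ym - f x y) <= ssr (gy (row_mx x y)).
Proof.
have H := FOy2 x y ym.
set a := enorm (ym - y) in H; set e := enorm (gy (row_mx x y)) in H.
rewrite -enorm_sq -/e.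
have h1 : 2 * mu * (f x ym - f x y) <= 2 * mu * (a * e - mu / 2 * a ^+ 2).
  by rewrite ler_pM2l ?mulr_gt0 //; lra.
apply: (le_trans h1).
have := sqr_ge0 (mu * a - e).
have -> : 2 * mu * (a * e - mu / 2 * a ^+ 2) = e ^+ 2 - (mu * a - e) ^+ 2 by field.
lra.
Qed.

Lemma UpB x y xm : 2 * mu * (f x y - f xm y) <= ssr (gx (row_mx x y)).
Proof.
have H := FOx2 x xm y.
set a := enorm (xm - x) in H; set e := enorm (gx (row_mx x y)) in H.
rewrite -enorm_sq -/e.
have h1 : 2 * mu * (f x y - f xm y) <= 2 * mu * (a * e - mu / 2 * a ^+ 2).
  by rewrite ler_pM2l ?mulr_gt0 //; lra.
apply: (le_trans h1).
have := sqr_ge0 (mu * a - e).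
have -> : 2 * mu * (a * e - mu / 2 * a ^+ 2) = e ^+ 2 - (mu * a - e) ^+ 2 by field.
lra.
Qed.


Lemma main x y : exists ym xm,
  (forall y', f x y' <= f x ym) /\ (forall x', f xm y <= f x' y) /\
  mu / L ^+ 2 * merit f (row_mx x y) <= f x ym - f xm y /\
  f x ym - f xm y <= L / mu ^+ 2 * merit f (row_mx x y).
Proof.
set z := row_mx x y.
set ex := enorm (gx z); set ey := enorm (gy z).
have ex0 : 0 <= ex := enorm_ge0 _.
have ey0 : 0 <= ey := enorm_ge0 _.
have [ym hym] : exists ym, forall y', - f x ym <= - f x y'.
  apply: (exists_min (fun y' => - f x y') y (2 * ey / mu)).
  - have -> : (fun y' => - f x y') = (fun y' => - (G \o (fun y' => row_mx x y')) y').
      by apply/funext => y'; rewrite /= jointE.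
    move=> q; apply: continuousN; apply: continuous_comp; [exact: cont_row_mxr | exact: Gcont].
  - by apply: divr_ge0; [apply: mulr_ge0 | apply: ltW].
  - move=> y' hr; have H := FOy2 x y y'; rewrite -/z -/ey in H.
    set a := enorm (y' - y) in H.
    have ha : `|y - y'| <= a by rewrite distrC; exact: mxnorm_le_enorm.
    have h2 : 2 * ey < a * mu by rewrite -ltr_pdivrMr //; exact: lt_le_trans hr ha.
    have a0 : 0 <= a := enorm_ge0 _.
    have h3 : 0 <= a * mu - 2 * ey by rewrite subr_ge0 ltW.
    have := mulr_ge0 a0 h3.
    move=> hh; rewrite lerN2; nra.
have hym' : forall y', f x y' <= f x ym by move=> y'; have := hym y'; rewrite lerN2.
have [xm hxm] : exists xm, forall x', f xm y <= f x' y.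
  apply: (exists_min (fun x' => f x' y) x (2 * ex / mu)).
  - have -> : (fun x' => f x' y) = (G \o (fun x' => row_mx x' y)).
      by apply/funext => x'; rewrite /= jointE.
    move=> q; apply: continuous_comp; [exact: cont_row_mxl | exact: Gcont].
  - by apply: divr_ge0; [apply: mulr_ge0 | apply: ltW].
  - move=> x' hr; have H := FOx2 x x' y; rewrite -/z -/ex in H.
    set a := enorm (x' - x) in H.
    have ha : `|x - x'| <= a by rewrite distrC; exact: mxnorm_le_enorm.
    have h2 : 2 * ex < a * mu by rewrite -ltr_pdivrMr //; exact: lt_le_trans hr ha.
    have a0 : 0 <= a := enorm_ge0 _.
    have h3 : 0 <= a * mu - 2 * ex by rewrite subr_ge0 ltW.
    have := mulr_ge0 a0 h3.
    move=> hh; nra.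
exists ym, xm; split => //; split => //.
rewrite merit_eq -/z.
set bx := ssr (gx z); set by' := ssr (gy z).
have A0 : 0 <= f x ym - f x y by rewrite subr_ge0.
have B0 : 0 <= f x y - f xm y by rewrite subr_ge0.
have uA := UpA x y ym; have uB := UpB x y xm.
have lA := LoA x y ym hym'; have lB := LoB x y xm hxm.
rewrite -/z -/bx -/by' in uA uB lA lB.
have bx0 : 0 <= bx := ssr_ge0 _.
have by0 : 0 <= by' := ssr_ge0 _.
have -> : f x ym - f xm y = (f x ym - f x y) + (f x y - f xm y) by rewrite addrA subrK.
move: A0 B0 uA uB lA lB; set A := f x ym - f x y; set B := f x y - f xm y => A0 B0 uA uB lA lB.
case: (eqVneq (bx + by') 0) => hQ.
  have hA : A <= 0.
    by rewrite -(pmulr_rle0 _ (_ : 0 < 2 * mu)) ?mulr_gt0 //; lra.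
  have hB : B <= 0.
    by rewrite -(pmulr_rle0 _ (_ : 0 < 2 * mu)) ?mulr_gt0 //; lra.
  rewrite hQ !mulr0; split; lra.
have Qp : 0 < bx + by' by rewrite lt_def hQ addr_ge0.
case: (ltrP 0 L) => hL.
  have LpE : Lp = L by rewrite /Lp max_l // ltW.
  have LE : forall b, L^-1 * b - L / 2 * L^-1 ^+ 2 * b = b / (2 * L).
    by move=> b; field; rewrite gt_eqF.
  have Li : 0 <= L^-1 by rewrite invr_ge0 ltW.
  apply: arith => //.
    have := lA L^-1 Li; rewrite LpE LE ler_pdivrMr ?mulr_gt0 //.
    by rewrite mulrC.
  have := lB L^-1 Li; rewrite LpE LE ler_pdivrMr ?mulr_gt0 //.
  by rewrite mulrC.
have LpE : Lp = 0 by rewrite /Lp max_r.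
have mE : forall b, 2 * mu * (mu^-1 * b) = 2 * b by move=> b; field; rewrite gt_eqF.
have Mi : 0 <= mu^-1 by rewrite invr_ge0 ltW.
have h1 : mu^-1 * by' <= A.
  by have := lA mu^-1 Mi; rewrite LpE !mul0r subr0.
have h2 : mu^-1 * bx <= B.
  by have := lB mu^-1 Mi; rewrite LpE !mul0r subr0.
have h1' := le_trans (ler_wpM2l (ltW (mulr_gt0 (ltr0Sn _ 1) mu0)) h1) uA.
have h2' := le_trans (ler_wpM2l (ltW (mulr_gt0 (ltr0Sn _ 1) mu0)) h2) uB.
rewrite mE in h1'; rewrite mE in h2'.
lra.
Qed.

End P.

Local Close Scope classical_set_scope.

Theorem proposition2p5 (R : realType) (n m : nat)
    (f : 'rV[R]_n -> 'rV[R]_m -> R) (mu L : R) :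
  0 < mu ->
  C2 (joint f) ->
  (forall y, strongly_convex mu (fun x => f x y)) ->
  (forall x, strongly_concave mu (fun y => f x y)) ->
  (forall z, spec_norm_le (jacF f z) L) ->
  forall (x : 'rV[R]_n) (y : 'rV[R]_m),
    exists (ymax : 'rV[R]_m) (xmin : 'rV[R]_n),
      (forall y', f x y' <= f x ymax) /\
      (forall x', f xmin y <= f x' y) /\
      mu / L ^+ 2 * merit f (row_mx x y) <= f x ymax - f xmin y /\
      f x ymax - f xmin y <= L / mu ^+ 2 * merit f (row_mx x y).
Proof.
move=> mu0 hC hx hy hJ x y.
exact: (@main R n m f mu L mu0 hC hx hy hJ x y).
Qed.
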